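(* Let $P \subseteq \mathbb{R}^7$ be an associative $3$-plane. Then the orthogonal direct sum $\Theta(P) = \Lambda^2(P) \oplus \Psi(P)$ is a Lie subalgebra of $\Lambda^2(\mathbb{R}^7) = \mathfrak{so}(7)$ isomorphic to $\mathfrak{so}(4)$.
   Context: Equip $\mathbb{R}^7$ with its standard inner product, orientation and basis. Let $\varphi = e_{123} - e_{167} - e_{527} - e_{563} - e_{415} - e_{426} - e_{437}$ ($e_{ijk} = e_i\wedge e_j\wedge e_k$), $\psi = \star\varphi = e_{4567} - e_{4523} - e_{4163} - e_{4127} - e_{2637} - e_{1537} - e_{1526}$, and define $\times$ by $\langle u \times v, w \rangle = \varphi(u,v,w)$. A $3$-dimensional subspace is associative if closed under $\times$. For $u,v$: $u\wedge v$ is the 2-form $(a,b)\mapsto \langle u,a\rangle\langle v,b\rangle - \langle u,b\rangle\langle v,a\rangle$, and $\Psi_{uv}$ is the 2-form $(a,b)\mapsto\psi(u,v,a,b)$. $\Lambda^2(P) = \mathrm{Span}\{u\wedge v: u,v\in P\}$, $\Psi(P) = \mathrm{Span}\{\Psi_{uv} : u,v\in P\}$. Skew bilinear forms are identified with skew-adjoint operators via $X(a,b) = \langle X(a),b\rangle$, the bracket is the commutator, and the inner product on $\Lambda^2$ is $\langle X,Y\rangle = \sum_{i,j} X(e_i,e_j)Y(e_i,e_j)$. *)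

(* Defs.v *)
(* Vectors of R^7 are row vectors 'rV[R]_7; the standard
   basis vector e_i (1-based index i in the paper) is  ev (ix i).
   Skew bilinear forms X on R^7 are stored as 7x7 matrices of their values
   X(e_a, e_b).  Subspaces of R^7 are row spaces of matrices (mxalgebra). *)
From HB Require Import structures.
From mathcomp Require Import all_boot all_order all_algebra.
From mathcomp Require Import all_classical all_reals.
Set Implicit Arguments.
Unset Strict Implicit.
Unset Printing Implicit Defensive.
Import Order.TTheory GRing.Theory Num.Theory.
Local Open Scope ring_scope.

Section G2.
Variable R : realType.

Definition ix (n : nat) : 'I_7 := inord n.-1.

Definition ev (a : 'I_7) : 'rV[R]_7 := delta_mx 0 a.

Definition ip (u v : 'rV[R]_7) : R := \sum_(k < 7) u 0 k * v 0 k.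

(* e_{ijk} = e_i /\ e_j /\ e_k evaluated on (u,v,w) *)
Definition e3 (i j k : nat) (u v w : 'rV[R]_7) : R :=
  \det (\matrix_(a < 3, b < 3)
          (tnth [tuple u; v; w] a) 0 (tnth [tuple ix i; ix j; ix k] b)).

Definition e4 (i j k l : nat) (u v w x : 'rV[R]_7) : R :=
  \det (\matrix_(a < 4, b < 4)
          (tnth [tuple u; v; w; x] a) 0 (tnth [tuple ix i; ix j; ix k; ix l] b)).

Definition phi (u v w : 'rV[R]_7) : R :=
  e3 1 2 3 u v w - e3 1 6 7 u v w - e3 5 2 7 u v w - e3 5 6 3 u v w
  - e3 4 1 5 u v w - e3 4 2 6 u v w - e3 4 3 7 u v w.

Definition psi (u v w x : 'rV[R]_7) : R :=
  e4 4 5 6 7 u v w x - e4 4 5 2 3 u v w x - e4 4 1 6 3 u v w x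
  - e4 4 1 2 7 u v w x - e4 2 6 3 7 u v w x - e4 1 5 3 7 u v w x
  - e4 1 5 2 6 u v w x.

(* cross product: <u x v, w> = phi(u,v,w); its k-th coordinate is phi(u,v,e_k) *)
Definition cross (u v : 'rV[R]_7) : 'rV[R]_7 := \row_k phi u v (ev k).

Definition associative_plane (P : 'M[R]_7) : Prop :=
  \rank P = 3%N /\
  forall u v : 'rV[R]_7, (u <= P)%MS -> (v <= P)%MS -> (cross u v <= P)%MS.

Definition wedge (u v : 'rV[R]_7) : 'M[R]_7 :=
  \matrix_(a, b) (ip u (ev a) * ip v (ev b) - ip u (ev b) * ip v (ev a)).

Definition PsiF (u v : 'rV[R]_7) : 'M[R]_7 :=
  \matrix_(a, b) psi u v (ev a) (ev b).

Definition in_span2 (F : 'rV[R]_7 -> 'rV[R]_7 -> 'M[R]_7) (P : 'M[R]_7)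
  (X : 'M[R]_7) : Prop :=
  exists (n : nat) (c : 'I_n -> R) (u v : 'I_n -> 'rV[R]_7),
    (forall i, (u i <= P)%MS) /\ (forall i, (v i <= P)%MS) /\
    X = \sum_(i < n) c i *: F (u i) (v i).

Definition Lambda2 (P : 'M[R]_7) (X : 'M[R]_7) : Prop := in_span2 wedge P X.
Definition PsiSp (P : 'M[R]_7) (X : 'M[R]_7) : Prop := in_span2 PsiF P X.

Definition Theta (P : 'M[R]_7) (X : 'M[R]_7) : Prop :=
  exists A B, Lambda2 P A /\ PsiSp P B /\ X = A + B.

Definition ip2 (X Y : 'M[R]_7) : R := \sum_(i < 7) \sum_(j < 7) X i j * Y i j.

(* skew-adjoint operator associated to a form: X(a,b) = <X(a), b>.
   Column convention: (A a)_j = sum_i A j i a_i, so <A a, b> =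
   sum_{i,j} a_i X i j b_j  forces A = X^T. *)
Definition op_of (X : 'M[R]_7) : 'M[R]_7 := X^T.
Definition form_of (A : 'M[R]_7) : 'M[R]_7 := A^T.

Definition lie2 (X Y : 'M[R]_7) : 'M[R]_7 :=
  form_of (op_of X *m op_of Y - op_of Y *m op_of X).

Definition so4 (A : 'M[R]_4) : Prop := A^T = - A.
Definition lie4 (A B : 'M[R]_4) : 'M[R]_4 := A *m B - B *m A.

End G2.

(* Main.v *)
Require Import Defs.
From HB Require Import structures.
From mathcomp Require Import all_boot all_order all_algebra.
From mathcomp Require Import all_classical all_reals.
From mathcomp Require Import ring lra.
Import Order.TTheory GRing.Theory Num.Theory.
Local Open Scope ring_scope.
Set Implicit Arguments.
Unset Strict Implicit.

(* Proof strategy: pick an orthonormal frame p1, p2, p3 = p1 x p2 of the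
   associative plane P; show Theta(P) is spanned by W_i = p_j /\ p_k and
   Q_i = Phi_{p_i} - W_i (using the G2 identity Psi_uv = u /\ v - Phi_{u x v});
   compute the bracket table and map to so(4) = su(2) + su(2) via quaternions. *)

Section S.
Variable R : realType.
Implicit Types u v w x : 'rV[R]_7.

Definition app2 (g : nat -> nat -> R) (x y : nat) := g x y.

Lemma det3E (f : nat -> nat -> R) : \det (\matrix_(a < 3, b < 3) app2 f a b) =
  f 0%N 0%N * (f 1%N 1%N * f 2%N 2%N - f 1%N 2%N * f 2%N 1%N)
  - f 0%N 1%N * (f 1%N 0%N * f 2%N 2%N - f 1%N 2%N * f 2%N 0%N)
  + f 0%N 2%N * (f 1%N 0%N * f 2%N 1%N - f 1%N 1%N * f 2%N 0%N).
Proof.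
rewrite (expand_det_row _ 0) !big_ord_recr big_ord0 /= /cofactor.
rewrite !(expand_det_row _ 0) !big_ord_recr !big_ord0 /= /cofactor.
rewrite !det_mx11 !mxE /app2 /=.
ring.
Qed.

Lemma minor0E n (f : nat -> nat -> R) (j : 'I_n.+2) :
  row' 0 (col' j (\matrix_(a < n.+2, b < n.+2) app2 f a b)) =
  \matrix_(a < n.+1, b < n.+1) app2 (fun x y : nat => f (bump 0 x) (bump j y)) a b.
Proof. by apply/matrixP => a b; rewrite !mxE /app2. Qed.

Lemma det4E (f : nat -> nat -> R) : \det (\matrix_(a < 4, b < 4) app2 f a b) =
  0 + f 0%N 0%N * (f 1%N 1%N * (f 2%N 2%N * f 3%N 3%N - f 2%N 3%N * f 3%N 2%N) - f 1%N 2%N * (f 2%N 1%N * f 3%N 3%N - f 2%N 3%N * f 3%N 1%N) + f 1%N 3%N * (f 2%N 1%N * f 3%N 2%N - f 2%N 2%N * f 3%N 1%N))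
  - f 0%N 1%N * (f 1%N 0%N * (f 2%N 2%N * f 3%N 3%N - f 2%N 3%N * f 3%N 2%N) - f 1%N 2%N * (f 2%N 0%N * f 3%N 3%N - f 2%N 3%N * f 3%N 0%N) + f 1%N 3%N * (f 2%N 0%N * f 3%N 2%N - f 2%N 2%N * f 3%N 0%N))
  + f 0%N 2%N * (f 1%N 0%N * (f 2%N 1%N * f 3%N 3%N - f 2%N 3%N * f 3%N 1%N) - f 1%N 1%N * (f 2%N 0%N * f 3%N 3%N - f 2%N 3%N * f 3%N 0%N) + f 1%N 3%N * (f 2%N 0%N * f 3%N 1%N - f 2%N 1%N * f 3%N 0%N))
  - f 0%N 3%N * (f 1%N 0%N * (f 2%N 1%N * f 3%N 2%N - f 2%N 2%N * f 3%N 1%N) - f 1%N 1%N * (f 2%N 0%N * f 3%N 2%N - f 2%N 2%N * f 3%N 0%N) + f 1%N 2%N * (f 2%N 0%N * f 3%N 1%N - f 2%N 1%N * f 3%N 0%N)).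
Proof.
rewrite (expand_det_row _ 0) !big_ord_recr big_ord0 /= /cofactor.
rewrite !minor0E !det3E !mxE /app2 /=.
ring.
Qed.

Lemma ixK n : (0 < n <= 7)%N -> nat_of_ord (ix n) = n.-1.
Proof. move=> /andP[h1 h2]; rewrite /ix inordK //. by case: n h1 h2. Qed.

Lemma ev_ix n m : (0 < n <= 7)%N -> (0 < m <= 7)%N -> ev R (ix n) 0 (ix m) = (n == m)%:R.
Proof.
move=> hn hm; rewrite /ev mxE eqxx /=; congr (_ %:R).
rewrite eq_sym -(inj_eq val_inj) /= !ixK //.
by case: n hn => // n _; case: m hm.
Qed.

Lemma e3E i j k u v w : e3 i j k u v w =
  u 0 (ix i) * (v 0 (ix j) * w 0 (ix k) - v 0 (ix k) * w 0 (ix j))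
  - u 0 (ix j) * (v 0 (ix i) * w 0 (ix k) - v 0 (ix k) * w 0 (ix i))
  + u 0 (ix k) * (v 0 (ix i) * w 0 (ix j) - v 0 (ix j) * w 0 (ix i)).
Proof.
rewrite /e3 (_ : \matrix_(a < 3, b < 3) _ = \matrix_(a < 3, b < 3)
   app2 (fun a1 b1 : nat => (nth 0 [:: u; v; w] a1) 0 (nth ord0 [:: ix i; ix j; ix k] b1)) a b).
  by rewrite det3E /app2 /=.
by apply/matrixP => a b; rewrite !mxE /app2 !(tnth_nth 0) ?(tnth_nth ord0).
Qed.

Lemma e4E i j k l u v w x : e4 i j k l u v w x =
  \det (\matrix_(a < 4, b < 4)
   app2 (fun a1 b1 : nat => (nth 0 [:: u; v; w; x] a1) 0 (nth ord0 [:: ix i; ix j; ix k; ix l] b1)) a b).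
Proof.
rewrite /e4; congr (\det _).
by apply/matrixP => a b; rewrite !mxE /app2 !(tnth_nth 0) ?(tnth_nth ord0).
Qed.

Lemma ipE u v : ip u v = \sum_(n < 7) u 0 (ix n.+1) * v 0 (ix n.+1).
Proof. by apply: eq_bigr => k _; rewrite /ix /= inord_val. Qed.

Lemma ipE7 u v : ip u v = u 0 (ix 1) * v 0 (ix 1) + u 0 (ix 2) * v 0 (ix 2) +
  u 0 (ix 3) * v 0 (ix 3) + u 0 (ix 4) * v 0 (ix 4) + u 0 (ix 5) * v 0 (ix 5) +
  u 0 (ix 6) * v 0 (ix 6) + u 0 (ix 7) * v 0 (ix 7).
Proof. by rewrite ipE !big_ord_recr big_ord0 /= add0r. Qed.

Lemma crossC u v (n : nat) : cross u v 0 (ix n) = phi u v (ev R (ix n)).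
Proof. by rewrite /cross mxE. Qed.


Lemma phiE u v w : phi u v w =
  0 + (0 + u 0 (ix 1) * v 0 (ix 2) * w 0 (ix 3) - u 0 (ix 1) * v 0 (ix 3) * w 0 (ix 2) - u 0 (ix 2) * v 0 (ix 1) * w 0 (ix 3) + u 0 (ix 2) * v 0 (ix 3) * w 0 (ix 1) + u 0 (ix 3) * v 0 (ix 1) * w 0 (ix 2) - u 0 (ix 3) * v 0 (ix 2) * w 0 (ix 1))
  - (0 + u 0 (ix 1) * v 0 (ix 6) * w 0 (ix 7) - u 0 (ix 1) * v 0 (ix 7) * w 0 (ix 6) - u 0 (ix 6) * v 0 (ix 1) * w 0 (ix 7) + u 0 (ix 6) * v 0 (ix 7) * w 0 (ix 1) + u 0 (ix 7) * v 0 (ix 1) * w 0 (ix 6) - u 0 (ix 7) * v 0 (ix 6) * w 0 (ix 1))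
  - (0 + u 0 (ix 5) * v 0 (ix 2) * w 0 (ix 7) - u 0 (ix 5) * v 0 (ix 7) * w 0 (ix 2) - u 0 (ix 2) * v 0 (ix 5) * w 0 (ix 7) + u 0 (ix 2) * v 0 (ix 7) * w 0 (ix 5) + u 0 (ix 7) * v 0 (ix 5) * w 0 (ix 2) - u 0 (ix 7) * v 0 (ix 2) * w 0 (ix 5))
  - (0 + u 0 (ix 5) * v 0 (ix 6) * w 0 (ix 3) - u 0 (ix 5) * v 0 (ix 3) * w 0 (ix 6) - u 0 (ix 6) * v 0 (ix 5) * w 0 (ix 3) + u 0 (ix 6) * v 0 (ix 3) * w 0 (ix 5) + u 0 (ix 3) * v 0 (ix 5) * w 0 (ix 6) - u 0 (ix 3) * v 0 (ix 6) * w 0 (ix 5))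
  - (0 + u 0 (ix 4) * v 0 (ix 1) * w 0 (ix 5) - u 0 (ix 4) * v 0 (ix 5) * w 0 (ix 1) - u 0 (ix 1) * v 0 (ix 4) * w 0 (ix 5) + u 0 (ix 1) * v 0 (ix 5) * w 0 (ix 4) + u 0 (ix 5) * v 0 (ix 4) * w 0 (ix 1) - u 0 (ix 5) * v 0 (ix 1) * w 0 (ix 4))
  - (0 + u 0 (ix 4) * v 0 (ix 2) * w 0 (ix 6) - u 0 (ix 4) * v 0 (ix 6) * w 0 (ix 2) - u 0 (ix 2) * v 0 (ix 4) * w 0 (ix 6) + u 0 (ix 2) * v 0 (ix 6) * w 0 (ix 4) + u 0 (ix 6) * v 0 (ix 4) * w 0 (ix 2) - u 0 (ix 6) * v 0 (ix 2) * w 0 (ix 4))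
  - (0 + u 0 (ix 4) * v 0 (ix 3) * w 0 (ix 7) - u 0 (ix 4) * v 0 (ix 7) * w 0 (ix 3) - u 0 (ix 3) * v 0 (ix 4) * w 0 (ix 7) + u 0 (ix 3) * v 0 (ix 7) * w 0 (ix 4) + u 0 (ix 7) * v 0 (ix 4) * w 0 (ix 3) - u 0 (ix 7) * v 0 (ix 3) * w 0 (ix 4)).
Proof. by rewrite /phi !e3E; ring. Qed.

Lemma psiE u v w x : psi u v w x =
  0 + (0 + u 0 (ix 4) * v 0 (ix 5) * w 0 (ix 6) * x 0 (ix 7) - u 0 (ix 4) * v 0 (ix 5) * w 0 (ix 7) * x 0 (ix 6) - u 0 (ix 4) * v 0 (ix 6) * w 0 (ix 5) * x 0 (ix 7) + u 0 (ix 4) * v 0 (ix 6) * w 0 (ix 7) * x 0 (ix 5) + u 0 (ix 4) * v 0 (ix 7) * w 0 (ix 5) * x 0 (ix 6) - u 0 (ix 4) * v 0 (ix 7) * w 0 (ix 6) * x 0 (ix 5) - u 0 (ix 5) * v 0 (ix 4) * w 0 (ix 6) * x 0 (ix 7) + u 0 (ix 5) * v 0 (ix 4) * w 0 (ix 7) * x 0 (ix 6) + u 0 (ix 5) * v 0 (ix 6) * w 0 (ix 4) * x 0 (ix 7) - u 0 (ix 5) * v 0 (ix 6) * w 0 (ix 7) * x 0 (ix 4) - u 0 (ix 5) * v 0 (ix 7) * w 0 (ix 4) * x 0 (ix 6) + u 0 (ix 5) * v 0 (ix 7) * w 0 (ix 6) * x 0 (ix 4) + u 0 (ix 6) * v 0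 (ix 4) * w 0 (ix 5) * x 0 (ix 7) - u 0 (ix 6) * v 0 (ix 4) * w 0 (ix 7) * x 0 (ix 5) - u 0 (ix 6) * v 0 (ix 5) * w 0 (ix 4) * x 0 (ix 7) + u 0 (ix 6) * v 0 (ix 5) * w 0 (ix 7) * x 0 (ix 4) + u 0 (ix 6) * v 0 (ix 7) * w 0 (ix 4) * x 0 (ix 5) - u 0 (ix 6) * v 0 (ix 7) * w 0 (ix 5) * x 0 (ix 4) - u 0 (ix 7) * v 0 (ix 4) * w 0 (ix 5) * x 0 (ix 6) + u 0 (ix 7) * v 0 (ix 4) * w 0 (ix 6) * x 0 (ix 5) + u 0 (ix 7) * v 0 (ix 5) * w 0 (ix 4) * x 0 (ix 6) - u 0 (ix 7) * v 0 (ix 5) * w 0 (ix 6) * x 0 (ix 4) - u 0 (ix 7) * v 0 (ix 6) * w 0 (ix 4) * x 0 (ix 5) + u 0 (ix 7) * v 0 (ix 6) * w 0 (ix 5) * x 0 (ix 4))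
  - (0 + u 0 (ix 4) * v 0 (ix 5) * w 0 (ix 2) * x 0 (ix 3) - u 0 (ix 4) * v 0 (ix 5) * w 0 (ix 3) * x 0 (ix 2) - u 0 (ix 4) * v 0 (ix 2) * w 0 (ix 5) * x 0 (ix 3) + u 0 (ix 4) * v 0 (ix 2) * w 0 (ix 3) * x 0 (ix 5) + u 0 (ix 4) * v 0 (ix 3) * w 0 (ix 5) * x 0 (ix 2) - u 0 (ix 4) * v 0 (ix 3) * w 0 (ix 2) * x 0 (ix 5) - u 0 (ix 5) * v 0 (ix 4) * w 0 (ix 2) * x 0 (ix 3) + u 0 (ix 5) * v 0 (ix 4) * w 0 (ix 3) * x 0 (ix 2) + u 0 (ix 5) * v 0 (ix 2) * w 0 (ix 4) * x 0 (ix 3) - u 0 (ix 5) * v 0 (ix 2) * w 0 (ix 3) * x 0 (ix 4) - u 0 (ix 5) * v 0 (ix 3) * w 0 (ix 4) * x 0 (ix 2) + u 0 (ix 5) * v 0 (ix 3) * w 0 (ix 2) * x 0 (ix 4) + u 0 (ix 2) * v 0 (ix 4) * w 0 (ix 5) * x 0 (ix 3) - u 0 (ix 2) * v 0 (ix 4) * w 0 (ix 3) * x 0 (ix 5) - u 0 (ix 2) * v 0 (ix 5) * w 0 (ix 4) * x 0 (ix 3) + u 0 (ix 2) * v 0 (ix 5) * w 0 (ix 3) * x 0 (ix 4) + u 0 (ix 2) * v 0 (ix 3) * w 0 (ix 4) * x 0 (ix 5) - u 0 (ix 2) * v 0 (ix 3) * w 0 (ix 5) * x 0 (ix 4) - u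 0 (ix 3) * v 0 (ix 4) * w 0 (ix 5) * x 0 (ix 2) + u 0 (ix 3) * v 0 (ix 4) * w 0 (ix 2) * x 0 (ix 5) + u 0 (ix 3) * v 0 (ix 5) * w 0 (ix 4) * x 0 (ix 2) - u 0 (ix 3) * v 0 (ix 5) * w 0 (ix 2) * x 0 (ix 4) - u 0 (ix 3) * v 0 (ix 2) * w 0 (ix 4) * x 0 (ix 5) + u 0 (ix 3) * v 0 (ix 2) * w 0 (ix 5) * x 0 (ix 4))
  - (0 + u 0 (ix 4) * v 0 (ix 1) * w 0 (ix 6) * x 0 (ix 3) - u 0 (ix 4) * v 0 (ix 1) * w 0 (ix 3) * x 0 (ix 6) - u 0 (ix 4) * v 0 (ix 6) * w 0 (ix 1) * x 0 (ix 3) + u 0 (ix 4) * v 0 (ix 6) * w 0 (ix 3) * x 0 (ix 1) + u 0 (ix 4) * v 0 (ix 3) * w 0 (ix 1) * x 0 (ix 6) - u 0 (ix 4) * v 0 (ix 3) * w 0 (ix 6) * x 0 (ix 1) - u 0 (ix 1) * v 0 (ix 4) * w 0 (ix 6) * x 0 (ix 3) + u 0 (ix 1) * v 0 (ix 4) * w 0 (ix 3) * x 0 (ix 6) + u 0 (ix 1) * v 0 (ix 6) * w 0 (ix 4) * x 0 (ix 3) - u 0 (ix 1) * v 0 (ix 6) * w 0 (ix 3) * x 0 (ix 4) - u 0 (ix 1) * v 0 (ix 3) * w 0 (ix 4) * x 0 (ix 6) + u 0 (ix 1) * v 0 (ix 3) * w 0 (ix 6) * x 0 (ix 4) + u 0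 (ix 6) * v 0 (ix 4) * w 0 (ix 1) * x 0 (ix 3) - u 0 (ix 6) * v 0 (ix 4) * w 0 (ix 3) * x 0 (ix 1) - u 0 (ix 6) * v 0 (ix 1) * w 0 (ix 4) * x 0 (ix 3) + u 0 (ix 6) * v 0 (ix 1) * w 0 (ix 3) * x 0 (ix 4) + u 0 (ix 6) * v 0 (ix 3) * w 0 (ix 4) * x 0 (ix 1) - u 0 (ix 6) * v 0 (ix 3) * w 0 (ix 1) * x 0 (ix 4) - u 0 (ix 3) * v 0 (ix 4) * w 0 (ix 1) * x 0 (ix 6) + u 0 (ix 3) * v 0 (ix 4) * w 0 (ix 6) * x 0 (ix 1) + u 0 (ix 3) * v 0 (ix 1) * w 0 (ix 4) * x 0 (ix 6) - u 0 (ix 3) * v 0 (ix 1) * w 0 (ix 6) * x 0 (ix 4) - u 0 (ix 3) * v 0 (ix 6) * w 0 (ix 4) * x 0 (ix 1) + u 0 (ix 3) * v 0 (ix 6) * w 0 (ix 1) * x 0 (ix 4))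
  - (0 + u 0 (ix 4) * v 0 (ix 1) * w 0 (ix 2) * x 0 (ix 7) - u 0 (ix 4) * v 0 (ix 1) * w 0 (ix 7) * x 0 (ix 2) - u 0 (ix 4) * v 0 (ix 2) * w 0 (ix 1) * x 0 (ix 7) + u 0 (ix 4) * v 0 (ix 2) * w 0 (ix 7) * x 0 (ix 1) + u 0 (ix 4) * v 0 (ix 7) * w 0 (ix 1) * x 0 (ix 2) - u 0 (ix 4) * v 0 (ix 7) * w 0 (ix 2) * x 0 (ix 1) - u 0 (ix 1) * v 0 (ix 4) * w 0 (ix 2) * x 0 (ix 7) + u 0 (ix 1) * v 0 (ix 4) * w 0 (ix 7) * x 0 (ix 2) + u 0 (ix 1) * v 0 (ix 2) * w 0 (ix 4) * x 0 (ix 7) - u 0 (ix 1) * v 0 (ix 2) * w 0 (ix 7) * x 0 (ix 4) - u 0 (ix 1) * v 0 (ix 7) * w 0 (ix 4) * x 0 (ix 2) + u 0 (ix 1) * v 0 (ix 7) * w 0 (ix 2) * x 0 (ix 4) + u 0 (ix 2) * v 0 (ix 4) * w 0 (ix 1) * x 0 (ix 7) - u 0 (ix 2) * v 0 (ix 4) * w 0 (ix 7) * x 0 (ix 1) - u 0 (ix 2) * v 0 (ix 1) * w 0 (ix 4) * x 0 (ix 7) + u 0 (ix 2) * v 0 (ix 1) * w 0 (ix 7) * x 0 (ix 4) + u 0 (ix 2) * v 0 (ix 7) * w 0 (ix 4) * x 0 (ix 1) - u 0 (ix 2) * v 0 (ix 7) * w 0 (ix 1) * x 0 (ix 4) - u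 0 (ix 7) * v 0 (ix 4) * w 0 (ix 1) * x 0 (ix 2) + u 0 (ix 7) * v 0 (ix 4) * w 0 (ix 2) * x 0 (ix 1) + u 0 (ix 7) * v 0 (ix 1) * w 0 (ix 4) * x 0 (ix 2) - u 0 (ix 7) * v 0 (ix 1) * w 0 (ix 2) * x 0 (ix 4) - u 0 (ix 7) * v 0 (ix 2) * w 0 (ix 4) * x 0 (ix 1) + u 0 (ix 7) * v 0 (ix 2) * w 0 (ix 1) * x 0 (ix 4))
  - (0 + u 0 (ix 2) * v 0 (ix 6) * w 0 (ix 3) * x 0 (ix 7) - u 0 (ix 2) * v 0 (ix 6) * w 0 (ix 7) * x 0 (ix 3) - u 0 (ix 2) * v 0 (ix 3) * w 0 (ix 6) * x 0 (ix 7) + u 0 (ix 2) * v 0 (ix 3) * w 0 (ix 7) * x 0 (ix 6) + u 0 (ix 2) * v 0 (ix 7) * w 0 (ix 6) * x 0 (ix 3) - u 0 (ix 2) * v 0 (ix 7) * w 0 (ix 3) * x 0 (ix 6) - u 0 (ix 6) * v 0 (ix 2) * w 0 (ix 3) * x 0 (ix 7) + u 0 (ix 6) * v 0 (ix 2) * w 0 (ix 7) * x 0 (ix 3) + u 0 (ix 6) * v 0 (ix 3) * w 0 (ix 2) * x 0 (ix 7) - u 0 (ix 6) * v 0 (ix 3) * w 0 (ix 7) * x 0 (ix 2) - u 0 (ix 6) * v 0 (ix 7) * w 0 (ix 2) * x 0 (ix 3) + u 0 (ix 6) * v 0 (ix 7) * w 0 (ix 3) * x 0 (ix 2) + u 0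 (ix 3) * v 0 (ix 2) * w 0 (ix 6) * x 0 (ix 7) - u 0 (ix 3) * v 0 (ix 2) * w 0 (ix 7) * x 0 (ix 6) - u 0 (ix 3) * v 0 (ix 6) * w 0 (ix 2) * x 0 (ix 7) + u 0 (ix 3) * v 0 (ix 6) * w 0 (ix 7) * x 0 (ix 2) + u 0 (ix 3) * v 0 (ix 7) * w 0 (ix 2) * x 0 (ix 6) - u 0 (ix 3) * v 0 (ix 7) * w 0 (ix 6) * x 0 (ix 2) - u 0 (ix 7) * v 0 (ix 2) * w 0 (ix 6) * x 0 (ix 3) + u 0 (ix 7) * v 0 (ix 2) * w 0 (ix 3) * x 0 (ix 6) + u 0 (ix 7) * v 0 (ix 6) * w 0 (ix 2) * x 0 (ix 3) - u 0 (ix 7) * v 0 (ix 6) * w 0 (ix 3) * x 0 (ix 2) - u 0 (ix 7) * v 0 (ix 3) * w 0 (ix 2) * x 0 (ix 6) + u 0 (ix 7) * v 0 (ix 3) * w 0 (ix 6) * x 0 (ix 2))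
  - (0 + u 0 (ix 1) * v 0 (ix 5) * w 0 (ix 3) * x 0 (ix 7) - u 0 (ix 1) * v 0 (ix 5) * w 0 (ix 7) * x 0 (ix 3) - u 0 (ix 1) * v 0 (ix 3) * w 0 (ix 5) * x 0 (ix 7) + u 0 (ix 1) * v 0 (ix 3) * w 0 (ix 7) * x 0 (ix 5) + u 0 (ix 1) * v 0 (ix 7) * w 0 (ix 5) * x 0 (ix 3) - u 0 (ix 1) * v 0 (ix 7) * w 0 (ix 3) * x 0 (ix 5) - u 0 (ix 5) * v 0 (ix 1) * w 0 (ix 3) * x 0 (ix 7) + u 0 (ix 5) * v 0 (ix 1) * w 0 (ix 7) * x 0 (ix 3) + u 0 (ix 5) * v 0 (ix 3) * w 0 (ix 1) * x 0 (ix 7) - u 0 (ix 5) * v 0 (ix 3) * w 0 (ix 7) * x 0 (ix 1) - u 0 (ix 5) * v 0 (ix 7) * w 0 (ix 1) * x 0 (ix 3) + u 0 (ix 5) * v 0 (ix 7) * w 0 (ix 3) * x 0 (ix 1) + u 0 (ix 3) * v 0 (ix 1) * w 0 (ix 5) * x 0 (ix 7) - u 0 (ix 3) * v 0 (ix 1) * w 0 (ix 7) * x 0 (ix 5) - u 0 (ix 3) * v 0 (ix 5) * w 0 (ix 1) * x 0 (ix 7) + u 0 (ix 3) * v 0 (ix 5) * w 0 (ix 7) * x 0 (ix 1) + u 0 (ix 3) * v 0 (ix 7) * w 0 (ix 1) * x 0 (ix 5) - u 0 (ix 3) * v 0 (ix 7) * w 0 (ix 5) * x 0 (ix 1) - u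 0 (ix 7) * v 0 (ix 1) * w 0 (ix 5) * x 0 (ix 3) + u 0 (ix 7) * v 0 (ix 1) * w 0 (ix 3) * x 0 (ix 5) + u 0 (ix 7) * v 0 (ix 5) * w 0 (ix 1) * x 0 (ix 3) - u 0 (ix 7) * v 0 (ix 5) * w 0 (ix 3) * x 0 (ix 1) - u 0 (ix 7) * v 0 (ix 3) * w 0 (ix 1) * x 0 (ix 5) + u 0 (ix 7) * v 0 (ix 3) * w 0 (ix 5) * x 0 (ix 1))
  - (0 + u 0 (ix 1) * v 0 (ix 5) * w 0 (ix 2) * x 0 (ix 6) - u 0 (ix 1) * v 0 (ix 5) * w 0 (ix 6) * x 0 (ix 2) - u 0 (ix 1) * v 0 (ix 2) * w 0 (ix 5) * x 0 (ix 6) + u 0 (ix 1) * v 0 (ix 2) * w 0 (ix 6) * x 0 (ix 5) + u 0 (ix 1) * v 0 (ix 6) * w 0 (ix 5) * x 0 (ix 2) - u 0 (ix 1) * v 0 (ix 6) * w 0 (ix 2) * x 0 (ix 5) - u 0 (ix 5) * v 0 (ix 1) * w 0 (ix 2) * x 0 (ix 6) + u 0 (ix 5) * v 0 (ix 1) * w 0 (ix 6) * x 0 (ix 2) + u 0 (ix 5) * v 0 (ix 2) * w 0 (ix 1) * x 0 (ix 6) - u 0 (ix 5) * v 0 (ix 2) * w 0 (ix 6) * x 0 (ix 1) - u 0 (ix 5) * v 0 (ix 6) * w 0 (ix 1) * x 0 (ix 2) + u 0 (ix 5) * v 0 (ix 6) * w 0 (ix 2) * x 0 (ix 1) + u 0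 (ix 2) * v 0 (ix 1) * w 0 (ix 5) * x 0 (ix 6) - u 0 (ix 2) * v 0 (ix 1) * w 0 (ix 6) * x 0 (ix 5) - u 0 (ix 2) * v 0 (ix 5) * w 0 (ix 1) * x 0 (ix 6) + u 0 (ix 2) * v 0 (ix 5) * w 0 (ix 6) * x 0 (ix 1) + u 0 (ix 2) * v 0 (ix 6) * w 0 (ix 1) * x 0 (ix 5) - u 0 (ix 2) * v 0 (ix 6) * w 0 (ix 5) * x 0 (ix 1) - u 0 (ix 6) * v 0 (ix 1) * w 0 (ix 5) * x 0 (ix 2) + u 0 (ix 6) * v 0 (ix 1) * w 0 (ix 2) * x 0 (ix 5) + u 0 (ix 6) * v 0 (ix 5) * w 0 (ix 1) * x 0 (ix 2) - u 0 (ix 6) * v 0 (ix 5) * w 0 (ix 2) * x 0 (ix 1) - u 0 (ix 6) * v 0 (ix 2) * w 0 (ix 1) * x 0 (ix 5) + u 0 (ix 6) * v 0 (ix 2) * w 0 (ix 5) * x 0 (ix 1)).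
Proof. by rewrite /psi !e4E !det4E /app2 /=; ring. Qed.

Lemma cross1 u v : cross u v 0 (ix 1) =
  0 + (u 0 (ix 2) * v 0 (ix 3) - u 0 (ix 3) * v 0 (ix 2)) - (u 0 (ix 6) * v 0 (ix 7) - u 0 (ix 7) * v 0 (ix 6)) + (u 0 (ix 4) * v 0 (ix 5) - u 0 (ix 5) * v 0 (ix 4)).
Proof. by rewrite crossC phiE !ev_ix //=; ring. Qed.

Lemma cross2 u v : cross u v 0 (ix 2) =
  0 - (u 0 (ix 1) * v 0 (ix 3) - u 0 (ix 3) * v 0 (ix 1)) + (u 0 (ix 5) * v 0 (ix 7) - u 0 (ix 7) * v 0 (ix 5)) + (u 0 (ix 4) * v 0 (ix 6) - u 0 (ix 6) * v 0 (ix 4)).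
Proof. by rewrite crossC phiE !ev_ix //=; ring. Qed.

Lemma cross3 u v : cross u v 0 (ix 3) =
  0 + (u 0 (ix 1) * v 0 (ix 2) - u 0 (ix 2) * v 0 (ix 1)) - (u 0 (ix 5) * v 0 (ix 6) - u 0 (ix 6) * v 0 (ix 5)) + (u 0 (ix 4) * v 0 (ix 7) - u 0 (ix 7) * v 0 (ix 4)).
Proof. by rewrite crossC phiE !ev_ix //=; ring. Qed.

Lemma cross4 u v : cross u v 0 (ix 4) =
  0 - (u 0 (ix 1) * v 0 (ix 5) - u 0 (ix 5) * v 0 (ix 1)) - (u 0 (ix 2) * v 0 (ix 6) - u 0 (ix 6) * v 0 (ix 2)) - (u 0 (ix 3) * v 0 (ix 7) - u 0 (ix 7) * v 0 (ix 3)).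
Proof. by rewrite crossC phiE !ev_ix //=; ring. Qed.

Lemma cross5 u v : cross u v 0 (ix 5) =
  0 - (u 0 (ix 2) * v 0 (ix 7) - u 0 (ix 7) * v 0 (ix 2)) - (u 0 (ix 6) * v 0 (ix 3) - u 0 (ix 3) * v 0 (ix 6)) - (u 0 (ix 4) * v 0 (ix 1) - u 0 (ix 1) * v 0 (ix 4)).
Proof. by rewrite crossC phiE !ev_ix //=; ring. Qed.

Lemma cross6 u v : cross u v 0 (ix 6) =
  0 + (u 0 (ix 1) * v 0 (ix 7) - u 0 (ix 7) * v 0 (ix 1)) + (u 0 (ix 5) * v 0 (ix 3) - u 0 (ix 3) * v 0 (ix 5)) - (u 0 (ix 4) * v 0 (ix 2) - u 0 (ix 2) * v 0 (ix 4)).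
Proof. by rewrite crossC phiE !ev_ix //=; ring. Qed.

Lemma cross7 u v : cross u v 0 (ix 7) =
  0 - (u 0 (ix 1) * v 0 (ix 6) - u 0 (ix 6) * v 0 (ix 1)) - (u 0 (ix 5) * v 0 (ix 2) - u 0 (ix 2) * v 0 (ix 5)) - (u 0 (ix 4) * v 0 (ix 3) - u 0 (ix 3) * v 0 (ix 4)).
Proof. by rewrite crossC phiE !ev_ix //=; ring. Qed.


Ltac coords := rewrite ?ipE7 ?psiE ?phiE ?cross1 ?cross2 ?cross3 ?cross4 ?cross5 ?cross6 ?cross7.

Lemma phi_ip u v w : phi u v w = ip (cross u v) w.
Proof. coords; ring. Qed.

Lemma psiI1 u v w x : psi u v w x = (ip u w * ip v x - ip u x * ip v w) - phi (cross u v) w x.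
Proof. coords; ring. Qed.

Lemma I3 u v w x : ip (cross v w) (cross u x) - ip (cross u w) (cross v x) =
   - 3 * (ip u w * ip v x - ip u x * ip v w) + 2 * phi (cross u v) w x.
Proof. coords; ring. Qed.

Lemma phi_a23 u v w : phi u v w = - phi u w v.
Proof. coords; ring. Qed.
Lemma phi_a12 u v w : phi u v w = - phi v u w.
Proof. coords; ring. Qed.
Lemma ipC u v : ip u v = ip v u.
Proof. coords; ring. Qed.
Lemma V5 u v w : ip (cross u w) (cross v w) = ip u v * ip w w - ip u w * ip v w.
Proof. coords; ring. Qed.

Lemma vec_eq u v : u 0 (ix 1) = v 0 (ix 1) -> u 0 (ix 2) = v 0 (ix 2) ->
  u 0 (ix 3) = v 0 (ix 3) -> u 0 (ix 4) = v 0 (ix 4) -> u 0 (ix 5) = v 0 (ix 5) ->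
  u 0 (ix 6) = v 0 (ix 6) -> u 0 (ix 7) = v 0 (ix 7) -> u = v.
Proof.
move=> h1 h2 h3 h4 h5 h6 h7; apply/rowP => k.
have -> : k = ix k.+1 by apply/val_inj; rewrite /ix /= inordK.
by case: k => [[|[|[|[|[|[|[|k]]]]]]] Hk].
Qed.

Ltac veq := apply: vec_eq; do 2 coords; rewrite ?mxE; do 2 coords; rewrite ?ev_ix //=; ring.

Lemma crossxx u w : cross u (cross u w) = ip u w *: u - ip u u *: w.
Proof. veq. Qed.
Lemma cross_anti u v : cross v u = - cross u v.
Proof. veq. Qed.
Lemma crossDl u v w : cross (u + v) w = cross u w + cross v w.
Proof. veq. Qed.
Lemma crossZl (a : R) u w : cross (a *: u) w = a *: cross u w.
Proof. veq. Qed.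
Lemma crossDr u v w : cross w (u + v) = cross w u + cross w v.
Proof. veq. Qed.
Lemma crossZr (a : R) u w : cross w (a *: u) = a *: cross w u.
Proof. veq. Qed.
Lemma crossuu u : cross u u = 0.
Proof. veq. Qed.

Lemma ipDl u v w : ip (u + v) w = ip u w + ip v w.
Proof. coords; rewrite !mxE; ring. Qed.
Lemma ipZl (a : R) u w : ip (a *: u) w = a * ip u w.
Proof. coords; rewrite !mxE; ring. Qed.
Lemma ipDr u v w : ip w (u + v) = ip w u + ip w v.
Proof. coords; rewrite !mxE; ring. Qed.
Lemma ipZr (a : R) u w : ip w (a *: u) = a * ip w u.
Proof. coords; rewrite !mxE; ring. Qed.
Lemma phiDl u v w x : phi (u + v) w x = phi u w x + phi v w x.
Proof. coords; rewrite !mxE; ring. Qed.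
Lemma phiZl (a : R) u w x : phi (a *: u) w x = a * phi u w x.
Proof. coords; rewrite !mxE; ring. Qed.

End S.


Section S2.
Variable R : realType.
Implicit Types u v w x y : 'rV[R]_7.
Ltac coords := rewrite ?ipE7 ?psiE ?phiE ?cross1 ?cross2 ?cross3 ?cross4 ?cross5 ?cross6 ?cross7.
Lemma rvN u (k : 'I_7) : (- u) 0 k = - u 0 k. Proof. by rewrite mxE. Qed.
Lemma rvD u v (k : 'I_7) : (u + v) 0 k = u 0 k + v 0 k. Proof. by rewrite mxE. Qed.
Lemma rvZ (a : R) u (k : 'I_7) : (a *: u) 0 k = a * u 0 k. Proof. by rewrite mxE. Qed.
Ltac crd := do 2 coords; rewrite ?rvD ?rvN ?rvZ; do 2 coords.

Lemma ip_ev u a : ip u (ev R a) = u 0 a.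
Proof.
rewrite /ip (bigD1 a) //= big1 ?addr0; first by rewrite /ev mxE !eqxx mulr1.
by move=> k hk; rewrite /ev mxE eqxx /= (negPf hk) mulr0.
Qed.

Definition Phi w : 'M[R]_7 := \matrix_(a, b) phi w (ev R a) (ev R b).

Lemma mxBE (A B : 'M[R]_7) r s : (A - B) r s = A r s - B r s.
Proof. by rewrite !mxE. Qed.
Lemma mxDE (A B : 'M[R]_7) r s : (A + B) r s = A r s + B r s.
Proof. by rewrite !mxE. Qed.
Lemma mxZE (a : R) (A : 'M[R]_7) r s : (a *: A) r s = a * A r s.
Proof. by rewrite !mxE. Qed.

Lemma mulE (X Y : 'M[R]_7) r s : (X *m Y) r s = ip (row r X) (col s Y)^T.
Proof. by rewrite !mxE /ip; apply: eq_bigr => k _; rewrite !mxE. Qed.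

Lemma row_Phi w r : row r (Phi w) = cross w (ev R r).
Proof. by apply/rowP => k; rewrite !mxE. Qed.

Lemma colT_Phi w s : (col s (Phi w))^T = - cross w (ev R s).
Proof. by apply/rowP => k; rewrite !mxE phi_a23. Qed.

Lemma row_wedge u v r : row r (wedge u v) = ip u (ev R r) *: v - ip v (ev R r) *: u.
Proof. by apply/rowP => k; rewrite !mxE !ip_ev; ring. Qed.

Lemma colT_wedge u v s : (col s (wedge u v))^T = ip v (ev R s) *: u - ip u (ev R s) *: v.
Proof. by apply/rowP => k; rewrite !mxE !ip_ev; ring. Qed.

Lemma PsiF_eq u v : PsiF u v = wedge u v - Phi (cross u v).
Proof. by apply/matrixP => a b; rewrite !mxE psiI1. Qed.

Lemma lie2E (X Y : 'M[R]_7) : lie2 X Y = Y *m X - X *m Y.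
Proof. by rewrite /lie2 /form_of /op_of linearB /= !trmx_mul !trmxK. Qed.

Lemma G1 u v w x : ip (cross v w) (- cross u x) - ip (cross u w) (- cross v x) =
  3 * (ip u w * ip v x - ip u x * ip v w) - 2 * phi (cross u v) w x.
Proof. crd; ring. Qed.

Lemma lie2_PhiPhi u v : lie2 (Phi u) (Phi v) = 3 *: wedge u v - 2 *: Phi (cross u v).
Proof.
apply/matrixP => r s; rewrite lie2E mxBE !mulE !row_Phi !colT_Phi G1.
by rewrite mxBE !mxZE !mxE.
Qed.

Lemma G2 u v z w x :
  ip (cross z w) (ip v x *: u - ip u x *: v) - ip (ip u w *: v - ip v w *: u) (- cross z x)
  = (ip v w * ip (cross z u) x - ip v x * ip (cross z u) w)
    - (ip u w * ip (cross z v) x - ip u x * ip (cross z v) w).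
Proof. crd; ring. Qed.

Lemma lie2_wPhi u v z : lie2 (wedge u v) (Phi z) = wedge v (cross z u) - wedge u (cross z v).
Proof.
apply/matrixP => r s; rewrite lie2E mxBE !mulE row_Phi colT_Phi row_wedge colT_wedge G2.
by rewrite mxBE !mxE.
Qed.

Lemma G3 u v x y w z :
  ip (ip x w *: y - ip y w *: x) (ip v z *: u - ip u z *: v)
  - ip (ip u w *: v - ip v w *: u) (ip y z *: x - ip x z *: y)
  = - (ip v x * (ip u w * ip y z - ip u z * ip y w) - ip v y * (ip u w * ip x z - ip u z * ip x w)
       - ip u x * (ip v w * ip y z - ip v z * ip y w) + ip u y * (ip v w * ip x z - ip v z * ip x w)).
Proof. crd; ring. Qed.

Lemma lie2_ww u v x y : lie2 (wedge u v) (wedge x y) =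
  - (ip v x *: wedge u y - ip v y *: wedge u x - ip u x *: wedge v y + ip u y *: wedge v x).
Proof.
apply/matrixP => r s; rewrite lie2E mxBE !mulE !row_wedge !colT_wedge G3.
by rewrite !mxE.
Qed.
End S2.


Section S3.
Variable R : realType.
Implicit Types u v w x y : 'rV[R]_7.
Implicit Types X Y Z : 'M[R]_7.
Ltac coords := rewrite ?ipE7 ?psiE ?phiE ?cross1 ?cross2 ?cross3 ?cross4 ?cross5 ?cross6 ?cross7.
Ltac crd := do 2 coords; rewrite ?rvD ?rvN ?rvZ; do 2 coords.

Lemma ip2E X Y : ip2 X Y = \sum_(r < 7) ip (row r X) (row r Y).
Proof. by apply: eq_bigr => r _; rewrite /ip; apply: eq_bigr => k _; rewrite !mxE. Qed.

Lemma ev_rr (r : 'I_7) : ev R r 0 r = 1.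
Proof. by rewrite /ev mxE !eqxx. Qed.

Lemma ip2_PhiPhi u v : ip2 (Phi u) (Phi v) = 6 * ip u v.
Proof.
rewrite ip2E (eq_bigr (fun r => ip u v - u 0 r * v 0 r)); last first.
  by move=> r _; rewrite !row_Phi V5 !ip_ev ev_rr mulr1.
rewrite sumrB sumr_const card_ord -/(ip u v).
rewrite -mulr_natl; ring.
Qed.

Lemma G4 u v w e : ip (ip u e *: v - ip v e *: u) (cross w e) =
  ip v e * ip (cross w u) e - ip u e * ip (cross w v) e.
Proof. crd; ring. Qed.
Lemma G5 u v w : ip v (cross w u) - ip u (cross w v) = 2 * phi w u v.
Proof. crd; ring. Qed.

Lemma ip2_wPhi u v w : ip2 (wedge u v) (Phi w) = 2 * phi w u v.
Proof.
rewrite ip2E (eq_bigr (fun r => v 0 r * cross w u 0 r - u 0 r * cross w v 0 r)); last first.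
  by move=> r _; rewrite row_wedge row_Phi G4 !ip_ev.
by rewrite sumrB -/(ip v (cross w u)) -/(ip u (cross w v)) G5.
Qed.

Lemma G6 u v x y e : ip (ip u e *: v - ip v e *: u) (ip x e *: y - ip y e *: x) =
  ip v y * (ip u e * ip x e) - ip v x * (ip u e * ip y e)
  - (ip u y * (ip v e * ip x e) - ip u x * (ip v e * ip y e)).
Proof. crd; ring. Qed.

Lemma ip2_ww u v x y : ip2 (wedge u v) (wedge x y) = 2 * (ip u x * ip v y - ip u y * ip v x).
Proof.
rewrite ip2E (eq_bigr (fun r => ip v y * (u 0 r * x 0 r) - ip v x * (u 0 r * y 0 r)
   - (ip u y * (v 0 r * x 0 r) - ip u x * (v 0 r * y 0 r)))); last first.
  by move=> r _; rewrite !row_wedge G6 !ip_ev.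
rewrite !sumrB -!mulr_sumr -/(ip u x) -/(ip u y) -/(ip v x) -/(ip v y); ring.
Qed.

Lemma ip2Dl X Y Z : ip2 (X + Y) Z = ip2 X Z + ip2 Y Z.
Proof.
rewrite /ip2 -big_split; apply: eq_bigr => i _; rewrite -big_split.
by apply: eq_bigr => j _; rewrite mxE mulrDl.
Qed.
Lemma ip2Bl X Y Z : ip2 (X - Y) Z = ip2 X Z - ip2 Y Z.
Proof.
rewrite /ip2 -sumrB; apply: eq_bigr => i _; rewrite -sumrB.
by apply: eq_bigr => j _; rewrite !mxE mulrBl.
Qed.
Lemma ip2Zl a X Z : ip2 (a *: X) Z = a * ip2 X Z.
Proof.
rewrite /ip2 mulr_sumr; apply: eq_bigr => i _; rewrite mulr_sumr.
by apply: eq_bigr => j _; rewrite !mxE mulrA.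
Qed.
Lemma ip2C X Y : ip2 X Y = ip2 Y X.
Proof. by apply: eq_bigr => i _; apply: eq_bigr => j _; rewrite mulrC. Qed.
Lemma ip2Dr X Y Z : ip2 Z (X + Y) = ip2 Z X + ip2 Z Y.
Proof. by rewrite ip2C ip2Dl !(ip2C Z). Qed.
Lemma ip2Br X Y Z : ip2 Z (X - Y) = ip2 Z X - ip2 Z Y.
Proof. by rewrite ip2C ip2Bl !(ip2C Z). Qed.
Lemma ip2Zr a X Z : ip2 Z (a *: X) = a * ip2 Z X.
Proof. by rewrite ip2C ip2Zl ip2C. Qed.

Lemma lie2Dl X Y Z : lie2 (X + Y) Z = lie2 X Z + lie2 Y Z.
Proof. by rewrite !lie2E mulmxDl mulmxDr; apply/matrixP => i j; rewrite !mxE; ring. Qed.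
Lemma lie2Bl X Y Z : lie2 (X - Y) Z = lie2 X Z - lie2 Y Z.
Proof. by rewrite !lie2E mulmxBl mulmxBr; apply/matrixP => i j; rewrite !mxE; ring. Qed.
Lemma lie2Zl a X Z : lie2 (a *: X) Z = a *: lie2 X Z.
Proof. by rewrite !lie2E -scalemxAl -scalemxAr scalerBr. Qed.
Lemma lie2N X Y : lie2 Y X = - lie2 X Y.
Proof. by rewrite !lie2E opprB. Qed.
Lemma lie2Dr X Y Z : lie2 Z (X + Y) = lie2 Z X + lie2 Z Y.
Proof. by rewrite lie2N lie2Dl opprD -!lie2N. Qed.
Lemma lie2Br X Y Z : lie2 Z (X - Y) = lie2 Z X - lie2 Z Y.
Proof. by rewrite lie2N lie2Bl opprB -!lie2N addrC. Qed.
Lemma lie2Zr a X Z : lie2 Z (a *: X) = a *: lie2 Z X.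
Proof. by rewrite lie2N lie2Zl -scalerN -lie2N. Qed.
Lemma lie2xx X : lie2 X X = 0.
Proof. by rewrite lie2E subrr. Qed.

Lemma phiDl' u v w x : phi (u + v) w x = phi u w x + phi v w x.
Proof. exact: phiDl. Qed.

Lemma Phi_comb (z1 z2 z3 : R) p1 p2 p3 :
  Phi (z1 *: p1 + z2 *: p2 + z3 *: p3) = z1 *: Phi p1 + z2 *: Phi p2 + z3 *: Phi p3.
Proof. by apply/matrixP => a b; rewrite !mxE !phiDl !phiZl. Qed.

Lemma wedge_comb (x1 x2 x3 y1 y2 y3 : R) p1 p2 p3 :
  wedge (x1 *: p1 + x2 *: p2 + x3 *: p3) (y1 *: p1 + y2 *: p2 + y3 *: p3) =
  (x2 * y3 - x3 * y2) *: wedge p2 p3 + (x3 * y1 - x1 * y3) *: wedge p3 p1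
  + (x1 * y2 - x2 * y1) *: wedge p1 p2.
Proof. by apply/matrixP => a b; rewrite !mxE !ip_ev !mxE; ring. Qed.

Lemma cross_comb (x1 x2 x3 y1 y2 y3 : R) p1 p2 p3 :
  cross (x1 *: p1 + x2 *: p2 + x3 *: p3) (y1 *: p1 + y2 *: p2 + y3 *: p3) =
  (x1 * y1) *: cross p1 p1 + (x1 * y2) *: cross p1 p2 + (x1 * y3) *: cross p1 p3 +
  (x2 * y1) *: cross p2 p1 + (x2 * y2) *: cross p2 p2 + (x2 * y3) *: cross p2 p3 +
  (x3 * y1) *: cross p3 p1 + (x3 * y2) *: cross p3 p2 + (x3 * y3) *: cross p3 p3.
Proof. by rewrite !crossDl !crossDr !crossZl !crossZr !scalerA; apply/rowP => k; rewrite !mxE; ring. Qed.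

Lemma phi_uvu u v : phi u v u = 0.
Proof. coords; ring. Qed.
Lemma phi_uvv u v : phi u v v = 0.
Proof. coords; ring. Qed.
End S3.


Section S5.
Variable R : realType.
Implicit Types X Y Z : 'M[R]_7.

Definition mk4 (l : seq (seq R)) : 'M[R]_4 := \matrix_(i < 4, j < 4) nth 0 (nth [::] l i) j.
Definition A1 := mk4 [:: [:: 0; -(1/2); 0; 0]; [:: 1/2; 0; 0; 0]; [:: 0; 0; 0; -(1/2)]; [:: 0; 0; 1/2; 0]].
Definition A2 := mk4 [:: [:: 0; 0; -(1/2); 0]; [:: 0; 0; 0; 1/2]; [:: 1/2; 0; 0; 0]; [:: 0; -(1/2); 0; 0]].
Definition A3 := mk4 [:: [:: 0; 0; 0; -(1/2)]; [:: 0; 0; -(1/2); 0]; [:: 0; 1/2; 0; 0]; [:: 1/2; 0; 0; 0]].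
Definition B1 := mk4 [:: [:: 0; -1; 0; 0]; [:: 1; 0; 0; 0]; [:: 0; 0; 0; 1]; [:: 0; 0; -1; 0]].
Definition B2 := mk4 [:: [:: 0; 0; -1; 0]; [:: 0; 0; 0; -1]; [:: 1; 0; 0; 0]; [:: 0; 1; 0; 0]].
Definition B3 := mk4 [:: [:: 0; 0; 0; -1]; [:: 0; 0; 1; 0]; [:: 0; -1; 0; 0]; [:: 1; 0; 0; 0]].

Definition E4 (a1 a2 a3 b1 b2 b3 : R) : 'M[R]_4 :=
  a1 *: A1 + a2 *: A2 + a3 *: A3 + (b1 *: B1 + b2 *: B2 + b3 *: B3).

Ltac case4 i := case: i => [[|[|[|[|i]]]] ?] //.

Lemma E4_skew a1 a2 a3 b1 b2 b3 : so4 (E4 a1 a2 a3 b1 b2 b3).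
Proof.
rewrite /so4; apply/matrixP => i j; rewrite !mxE.
case4 i; case4 j; rewrite /= ; ring.
Qed.

Lemma E4_lie a1 a2 a3 b1 b2 b3 c1 c2 c3 d1 d2 d3 :
  lie4 (E4 a1 a2 a3 b1 b2 b3) (E4 c1 c2 c3 d1 d2 d3) =
  E4 (a2 * c3 - a3 * c2) (a3 * c1 - a1 * c3) (a1 * c2 - a2 * c1)
     (-2 * (b2 * d3 - b3 * d2)) (-2 * (b3 * d1 - b1 * d3)) (-2 * (b1 * d2 - b2 * d1)).
Proof.
rewrite /lie4; apply/matrixP => i j; rewrite !mxE !big_ord_recr !big_ord0 /= !mxE /=.
case4 i; case4 j; rewrite /=; field; done.
Qed.

Lemma ordE n (H : (n < 4)%N) : Ordinal H = inord n.
Proof. by apply: val_inj; rewrite /= inordK. Qed.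

Lemma E4_inj a1 a2 a3 b1 b2 b3 c1 c2 c3 d1 d2 d3 :
  E4 a1 a2 a3 b1 b2 b3 = E4 c1 c2 c3 d1 d2 d3 ->
  (a1 = c1 /\ a2 = c2 /\ a3 = c3) /\ (b1 = d1 /\ b2 = d2 /\ b3 = d3).
Proof.
move=> h.
have e i j := congr1 (fun M : 'M[R]_4 => M (inord i) (inord j)) h.
have e01 := e 0%N 1%N; have e23 := e 2%N 3%N; have e02 := e 0%N 2%N.
have e13 := e 1%N 3%N; have e03 := e 0%N 3%N; have e12 := e 1%N 2%N.
move: e01 e23 e02 e13 e03 e12; rewrite /E4 !mxE !inordK //= => e01 e23 e02 e13 e03 e12.
repeat split; lra.
Qed.

Lemma E4_surj (A : 'M[R]_4) : so4 A ->
  A = E4 (- (A (inord 0) (inord 1) + A (inord 2) (inord 3)))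
         (A (inord 1) (inord 3) - A (inord 0) (inord 2))
         (- (A (inord 0) (inord 3) + A (inord 1) (inord 2)))
         ((A (inord 2) (inord 3) - A (inord 0) (inord 1)) / 2)
         (- (A (inord 0) (inord 2) + A (inord 1) (inord 3)) / 2)
         ((A (inord 1) (inord 2) - A (inord 0) (inord 3)) / 2).
Proof.
move=> hA.
have hs (i j : 'I_4) : A j i = - A i j.
  by have := congr1 (fun M : 'M[R]_4 => M i j) hA; rewrite !mxE.
have hs' (i j : nat) : A (inord j) (inord i) = - A (inord i) (inord j) by apply: hs.
have d0 := hs' 0%N 0%N; have d1 := hs' 1%N 1%N; have d2 := hs' 2%N 2%N; have d3 := hs' 3%N 3%N.
have s01 := hs' 0%N 1%N; have s02 := hs' 0%N 2%N; have s03 := hs' 0%N 3%N.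
have s12 := hs' 1%N 2%N; have s13 := hs' 1%N 3%N; have s23 := hs' 2%N 3%N.
apply/matrixP => i j; rewrite /E4 !mxE.
case4 i; case4 j; rewrite /= !ordE; lra.
Qed.
End S5.


Section S6.
Variable R : realType.
Implicit Types X Y Z : 'M[R]_7.
Variables W1 W2 W3 Q1 Q2 Q3 : 'M[R]_7.

Definition comb (a1 a2 a3 b1 b2 b3 : R) : 'M[R]_7 :=
  a1 *: W1 + a2 *: W2 + a3 *: W3 + (b1 *: Q1 + b2 *: Q2 + b3 *: Q3).

Definition ThetaC X := exists a1 a2 a3 b1 b2 b3, X = comb a1 a2 a3 b1 b2 b3.

Definition thmap X : 'M[R]_4 :=
  E4 (ip2 X W1 / 2) (ip2 X W2 / 2) (ip2 X W3 / 2) (ip2 X Q1 / 4) (ip2 X Q2 / 4) (ip2 X Q3 / 4).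

Lemma thmap_lin a X Y : thmap (a *: X + Y) = a *: thmap X + thmap Y.
Proof. by rewrite /thmap /E4 !ip2Dl !ip2Zl; apply/matrixP => i j; rewrite !mxE; ring. Qed.

Lemma thmap_so4 X : so4 (thmap X).
Proof. exact: E4_skew. Qed.

Hypotheses (hWW12 : lie2 W1 W2 = W3) (hWW13 : lie2 W1 W3 = - W2) (hWW23 : lie2 W2 W3 = W1)
 (hQQ12 : lie2 Q1 Q2 = -2 *: Q3) (hQQ13 : lie2 Q1 Q3 = 2 *: Q2) (hQQ23 : lie2 Q2 Q3 = -2 *: Q1)
 (hWQ11 : lie2 W1 Q1 = 0) (hWQ12 : lie2 W1 Q2 = 0) (hWQ13 : lie2 W1 Q3 = 0)
 (hWQ21 : lie2 W2 Q1 = 0) (hWQ22 : lie2 W2 Q2 = 0) (hWQ23 : lie2 W2 Q3 = 0)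
 (hWQ31 : lie2 W3 Q1 = 0) (hWQ32 : lie2 W3 Q2 = 0) (hWQ33 : lie2 W3 Q3 = 0).

Lemma comb_lie a1 a2 a3 b1 b2 b3 c1 c2 c3 d1 d2 d3 :
  lie2 (comb a1 a2 a3 b1 b2 b3) (comb c1 c2 c3 d1 d2 d3) =
  comb (a2 * c3 - a3 * c2) (a3 * c1 - a1 * c3) (a1 * c2 - a2 * c1)
     (-2 * (b2 * d3 - b3 * d2)) (-2 * (b3 * d1 - b1 * d3)) (-2 * (b1 * d2 - b2 * d1)).
Proof.
have hWW21 : lie2 W2 W1 = - W3 by rewrite lie2N hWW12.
have hWW31 : lie2 W3 W1 = W2 by rewrite lie2N hWW13 opprK.
have hWW32 : lie2 W3 W2 = - W1 by rewrite lie2N hWW23.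
have hQQ21 : lie2 Q2 Q1 = 2 *: Q3 by rewrite lie2N hQQ12 scaleNr opprK.
have hQQ31 : lie2 Q3 Q1 = -2 *: Q2 by rewrite lie2N hQQ13 -scaleNr.
have hQQ32 : lie2 Q3 Q2 = 2 *: Q1 by rewrite lie2N hQQ23 scaleNr opprK.
have hQW11 : lie2 Q1 W1 = 0 by rewrite lie2N hWQ11 oppr0.
have hQW12 : lie2 Q1 W2 = 0 by rewrite lie2N hWQ21 oppr0.
have hQW13 : lie2 Q1 W3 = 0 by rewrite lie2N hWQ31 oppr0.
have hQW21 : lie2 Q2 W1 = 0 by rewrite lie2N hWQ12 oppr0.
have hQW22 : lie2 Q2 W2 = 0 by rewrite lie2N hWQ22 oppr0.
have hQW23 : lie2 Q2 W3 = 0 by rewrite lie2N hWQ32 oppr0.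
have hQW31 : lie2 Q3 W1 = 0 by rewrite lie2N hWQ13 oppr0.
have hQW32 : lie2 Q3 W2 = 0 by rewrite lie2N hWQ23 oppr0.
have hQW33 : lie2 Q3 W3 = 0 by rewrite lie2N hWQ33 oppr0.
rewrite /comb !lie2Dl !lie2Zl !lie2Dr !lie2Zr !lie2xx.
rewrite hWW12 hWW13 hWW23 hWW21 hWW31 hWW32 hQQ12 hQQ13 hQQ23 hQQ21 hQQ31 hQQ32.
rewrite hWQ11 hWQ12 hWQ13 hWQ21 hWQ22 hWQ23 hWQ31 hWQ32 hWQ33.
rewrite hQW11 hQW12 hQW13 hQW21 hQW22 hQW23 hQW31 hQW32 hQW33.
by apply/matrixP => i j; rewrite !mxE; ring.
Qed.

Lemma ThetaC_lie X Y : ThetaC X -> ThetaC Y -> ThetaC (lie2 X Y).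
Proof.
move=> [a1 [a2 [a3 [b1 [b2 [b3 ->]]]]]] [c1 [c2 [c3 [d1 [d2 [d3 ->]]]]]].
rewrite comb_lie; do 6 eexists; reflexivity.
Qed.

Hypotheses (g1 : forall a1 a2 a3 b1 b2 b3, ip2 (comb a1 a2 a3 b1 b2 b3) W1 = a1 * 2)
  (g2 : forall a1 a2 a3 b1 b2 b3, ip2 (comb a1 a2 a3 b1 b2 b3) W2 = a2 * 2)
  (g3 : forall a1 a2 a3 b1 b2 b3, ip2 (comb a1 a2 a3 b1 b2 b3) W3 = a3 * 2)
  (g4 : forall a1 a2 a3 b1 b2 b3, ip2 (comb a1 a2 a3 b1 b2 b3) Q1 = b1 * 4)
  (g5 : forall a1 a2 a3 b1 b2 b3, ip2 (comb a1 a2 a3 b1 b2 b3) Q2 = b2 * 4)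
  (g6 : forall a1 a2 a3 b1 b2 b3, ip2 (comb a1 a2 a3 b1 b2 b3) Q3 = b3 * 4).

Lemma thmap_comb a1 a2 a3 b1 b2 b3 : thmap (comb a1 a2 a3 b1 b2 b3) = E4 a1 a2 a3 b1 b2 b3.
Proof.
have h2 : (2 : R) != 0 by rewrite pnatr_eq0.
have h4 : (4 : R) != 0 by rewrite pnatr_eq0.
by rewrite /thmap g1 g2 g3 g4 g5 g6 !mulfK.
Qed.

Lemma thmap_inj X Y : ThetaC X -> ThetaC Y -> thmap X = thmap Y -> X = Y.
Proof.
move=> [a1 [a2 [a3 [b1 [b2 [b3 ->]]]]]] [c1 [c2 [c3 [d1 [d2 [d3 ->]]]]]].
rewrite !thmap_comb => /E4_inj [[-> [-> ->]] [-> [-> ->]]] //.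
Qed.

Lemma thmap_surj A : so4 A -> exists2 X, ThetaC X & thmap X = A.
Proof.
move=> /E4_surj ->; eexists; last exact: thmap_comb.
by do 6 eexists.
Qed.

Lemma thmap_lie X Y : ThetaC X -> ThetaC Y -> thmap (lie2 X Y) = lie4 (thmap X) (thmap Y).
Proof.
move=> [a1 [a2 [a3 [b1 [b2 [b3 ->]]]]]] [c1 [c2 [c3 [d1 [d2 [d3 ->]]]]]].
by rewrite comb_lie !thmap_comb E4_lie.
Qed.
End S6.


Section S4.
Variable R : realType.
Implicit Types u v w x y : 'rV[R]_7.
Implicit Types X Y Z : 'M[R]_7.

Lemma ipNl u v : ip (- u) v = - ip u v.
Proof. by rewrite -scaleN1r ipZl mulN1r. Qed.
Lemma ipNr u v : ip u (- v) = - ip u v.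
Proof. by rewrite -scaleN1r ipZr mulN1r. Qed.
Lemma ip0l v : ip 0 v = 0.
Proof. by rewrite -(scale0r 0) ipZl mul0r. Qed.
Lemma ip0r v : ip v 0 = 0.
Proof. by rewrite -(scale0r 0) ipZr mul0r. Qed.
Lemma ip2Nl X Y : ip2 (- X) Y = - ip2 X Y.
Proof. by rewrite -scaleN1r ip2Zl mulN1r. Qed.
Lemma ip2Nr X Y : ip2 X (- Y) = - ip2 X Y.
Proof. by rewrite -scaleN1r ip2Zr mulN1r. Qed.
Lemma crossNr u v : cross u (- v) = - cross u v.
Proof. by rewrite -scaleN1r crossZr scaleN1r. Qed.
Lemma crossNl u v : cross (- u) v = - cross u v.
Proof. by rewrite -scaleN1r crossZl scaleN1r. Qed.
Lemma phiNl u v w : phi (- u) v w = - phi u v w.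
Proof. by rewrite -scaleN1r phiZl mulN1r. Qed.
Lemma PhiN u : Phi (- u) = - Phi u.
Proof. by apply/matrixP => a b; rewrite !mxE phiNl. Qed.
Lemma PhiD u v : Phi (u + v) = Phi u + Phi v.
Proof. by apply/matrixP => a b; rewrite !mxE phiDl. Qed.
Lemma PhiZ (c : R) u : Phi (c *: u) = c *: Phi u.
Proof. by apply/matrixP => a b; rewrite !mxE phiZl. Qed.
Lemma Phi0 : Phi (0 : 'rV[R]_7) = 0.
Proof. by rewrite -(scale0r 0) PhiZ scale0r. Qed.
Lemma lie2_Phiw z u v : lie2 (Phi z) (wedge u v) = - (wedge v (cross z u) - wedge u (cross z v)).
Proof. by rewrite lie2N lie2_wPhi. Qed.
Lemma ip2_Phiw w u v : ip2 (Phi w) (wedge u v) = 2 * phi w u v.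
Proof. by rewrite ip2C ip2_wPhi. Qed.

Variables p1 p2 p3 : 'rV[R]_7.
Hypotheses (h11 : ip p1 p1 = 1) (h22 : ip p2 p2 = 1) (h12 : ip p1 p2 = 0)
  (hc : cross p1 p2 = p3).

Lemma h21 : ip p2 p1 = 0. Proof. by rewrite ipC. Qed.
Lemma h33 : ip p3 p3 = 1. Proof. by rewrite -hc V5 h11 h22 h12; ring. Qed.
Lemma h31 : ip p3 p1 = 0. Proof. by rewrite -hc -phi_ip phi_uvu. Qed.
Lemma h32 : ip p3 p2 = 0. Proof. by rewrite -hc -phi_ip phi_uvv. Qed.
Lemma h13 : ip p1 p3 = 0. Proof. by rewrite ipC h31. Qed.
Lemma h23 : ip p2 p3 = 0. Proof. by rewrite ipC h32. Qed.

Lemma c21 : cross p2 p1 = - p3. Proof. by rewrite cross_anti hc. Qed.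
Lemma c23 : cross p2 p3 = p1.
Proof. by rewrite -hc -(opprK (cross p1 p2)) -cross_anti crossNr crossxx h21 h22 scale0r scale1r sub0r opprK. Qed.
Lemma c31 : cross p3 p1 = p2.
Proof. by rewrite -hc cross_anti crossxx h12 h11 scale0r scale1r sub0r opprK. Qed.
Lemma c32 : cross p3 p2 = - p1. Proof. by rewrite cross_anti c23. Qed.
Lemma c13 : cross p1 p3 = - p2. Proof. by rewrite cross_anti c31. Qed.

Ltac tab := rewrite ?h11 ?h22 ?h33 ?h12 ?h21 ?h13 ?h31 ?h23 ?h32.
Ltac ctab := rewrite ?crossuu ?ip0l ?ip0r ?hc ?c21 ?c23 ?c31 ?c32 ?c13 ?PhiN ?ipNl ?ipNr.
Ltac ptab := rewrite ?phi_ip; ctab; tab.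
Ltac mxring := apply/matrixP => a b; rewrite !mxE ?ipNl ?ipNr ?phiNl ?ip0l ?ip0r; ring.

Local Notation W1 := (wedge p2 p3).
Local Notation W2 := (wedge p3 p1).
Local Notation W3 := (wedge p1 p2).
Local Notation Q1 := (Phi p1 - wedge p2 p3).
Local Notation Q2 := (Phi p2 - wedge p3 p1).
Local Notation Q3 := (Phi p3 - wedge p1 p2).

Ltac brk := rewrite ?lie2Bl ?lie2Br ?lie2_PhiPhi ?lie2_wPhi ?lie2_Phiw ?lie2_ww; ctab; tab; mxring.

Lemma WW12 : lie2 W1 W2 = W3. Proof. brk. Qed.
Lemma WW13 : lie2 W1 W3 = - W2. Proof. brk. Qed.
Lemma WW23 : lie2 W2 W3 = W1. Proof. brk. Qed.
Lemma QQ12 : lie2 Q1 Q2 = -2 *: Q3. Proof. brk. Qed.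
Lemma QQ13 : lie2 Q1 Q3 = 2 *: Q2. Proof. brk. Qed.
Lemma QQ23 : lie2 Q2 Q3 = -2 *: Q1. Proof. brk. Qed.
Lemma WQ11 : lie2 W1 Q1 = 0. Proof. brk. Qed.
Lemma WQ12 : lie2 W1 Q2 = 0. Proof. brk. Qed.
Lemma WQ13 : lie2 W1 Q3 = 0. Proof. brk. Qed.
Lemma WQ21 : lie2 W2 Q1 = 0. Proof. brk. Qed.
Lemma WQ22 : lie2 W2 Q2 = 0. Proof. brk. Qed.
Lemma WQ23 : lie2 W2 Q3 = 0. Proof. brk. Qed.
Lemma WQ31 : lie2 W3 Q1 = 0. Proof. brk. Qed.
Lemma WQ32 : lie2 W3 Q2 = 0. Proof. brk. Qed.
Lemma WQ33 : lie2 W3 Q3 = 0. Proof. brk. Qed.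

Ltac gram := do 3 rewrite ?ip2Dl ?ip2Bl ?ip2Zl ?ip2Dr ?ip2Br ?ip2Zr ?ip2Nl ?ip2Nr ?ip2_ww ?ip2_wPhi ?ip2_Phiw ?ip2_PhiPhi; ptab.


Local Notation cmb := (comb W1 W2 W3 Q1 Q2 Q3).

Lemma g1 a1 a2 a3 b1 b2 b3 : ip2 (cmb a1 a2 a3 b1 b2 b3) W1 = a1 * 2.
Proof. rewrite /comb; gram; ring. Qed.
Lemma g2 a1 a2 a3 b1 b2 b3 : ip2 (cmb a1 a2 a3 b1 b2 b3) W2 = a2 * 2.
Proof. rewrite /comb; gram; ring. Qed.
Lemma g3 a1 a2 a3 b1 b2 b3 : ip2 (cmb a1 a2 a3 b1 b2 b3) W3 = a3 * 2.
Proof. rewrite /comb; gram; ring. Qed.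
Lemma g4 a1 a2 a3 b1 b2 b3 : ip2 (cmb a1 a2 a3 b1 b2 b3) Q1 = b1 * 4.
Proof. rewrite /comb; gram; ring. Qed.
Lemma g5 a1 a2 a3 b1 b2 b3 : ip2 (cmb a1 a2 a3 b1 b2 b3) Q2 = b2 * 4.
Proof. rewrite /comb; gram; ring. Qed.
Lemma g6 a1 a2 a3 b1 b2 b3 : ip2 (cmb a1 a2 a3 b1 b2 b3) Q3 = b3 * 4.
Proof. rewrite /comb; gram; ring. Qed.

Lemma orthWQ a1 a2 a3 b1 b2 b3 :
  ip2 (a1 *: W1 + a2 *: W2 + a3 *: W3) (b1 *: Q1 + b2 *: Q2 + b3 *: Q3) = 0.
Proof. gram; ring. Qed.

Lemma PsiF_comb (x1 x2 x3 y1 y2 y3 : R) :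
  PsiF (x1 *: p1 + x2 *: p2 + x3 *: p3) (y1 *: p1 + y2 *: p2 + y3 *: p3) =
  (- (x2 * y3 - x3 * y2)) *: Q1 + (- (x3 * y1 - x1 * y3)) *: Q2 + (- (x1 * y2 - x2 * y1)) *: Q3.
Proof.
rewrite PsiF_eq wedge_comb cross_comb; ctab.
rewrite !PhiD !PhiZ ?PhiN ?Phi0; mxring.
Qed.

Lemma combP a1 a2 a3 b1 b2 b3 : cmb a1 a2 a3 b1 b2 b3 =
  (a1 *: W1 + a2 *: W2 + a3 *: W3) + ((- b1) *: PsiF p2 p3 + (- b2) *: PsiF p3 p1 + (- b3) *: PsiF p1 p2).
Proof. rewrite /comb !PsiF_eq; ctab; mxring. Qed.

End S4.


Section S8.
Variable R : realType.
Implicit Types X Y Z : 'M[R]_7.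
Variables (p1 p2 p3 : 'rV[R]_7) (P : 'M[R]_7).
Hypotheses (h11 : ip p1 p1 = 1) (h22 : ip p2 p2 = 1) (h12 : ip p1 p2 = 0)
  (hc : cross p1 p2 = p3).
Hypotheses (hp1 : (p1 <= P)%MS) (hp2 : (p2 <= P)%MS) (hp3 : (p3 <= P)%MS)
  (hspan : forall u, (u <= P)%MS -> u = ip u p1 *: p1 + ip u p2 *: p2 + ip u p3 *: p3).

Local Notation W1 := (wedge p2 p3).
Local Notation W2 := (wedge p3 p1).
Local Notation W3 := (wedge p1 p2).
Local Notation Q1 := (Phi p1 - wedge p2 p3).
Local Notation Q2 := (Phi p2 - wedge p3 p1).
Local Notation Q3 := (Phi p3 - wedge p1 p2).
Local Notation TC := (ThetaC W1 W2 W3 Q1 Q2 Q3).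

Lemma LamW X : Lambda2 P X -> exists a1 a2 a3, X = a1 *: W1 + a2 *: W2 + a3 *: W3.
Proof.
move=> [n [c [u [v [hu [hv ->]]]]]].
apply: (big_ind (fun X => exists a1 a2 a3, X = a1 *: W1 + a2 *: W2 + a3 *: W3)).
- by exists 0, 0, 0; rewrite !scale0r !addr0.
- move=> X1 X2 [a1 [a2 [a3 ->]]] [b1 [b2 [b3 ->]]].
  exists (a1 + b1), (a2 + b2), (a3 + b3).
  by apply/matrixP => i j; rewrite !mxE; ring.
- move=> i _; rewrite (hspan (hu i)) (hspan (hv i)) wedge_comb.
  do 3 eexists; rewrite !scalerDr !scalerA; reflexivity.
Qed.

Lemma PsiQ X : PsiSp P X -> exists b1 b2 b3, X = b1 *: Q1 + b2 *: Q2 + b3 *: Q3.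
Proof.
move=> [n [c [u [v [hu [hv ->]]]]]].
apply: (big_ind (fun X => exists b1 b2 b3, X = b1 *: Q1 + b2 *: Q2 + b3 *: Q3)).
- by exists 0, 0, 0; rewrite !scale0r !addr0.
- move=> X1 X2 [a1 [a2 [a3 ->]]] [b1 [b2 [b3 ->]]].
  exists (a1 + b1), (a2 + b2), (a3 + b3).
  by apply/matrixP => i j; rewrite !mxE; ring.
- move=> i _; rewrite (hspan (hu i)) (hspan (hv i)) (PsiF_comb h11 h22 h12 hc).
  do 3 eexists; rewrite !scalerDr !scalerA; reflexivity.
Qed.

Lemma thetaE X : Theta P X <-> TC X.
Proof.
split.
- move=> [A [B [/LamW [a1 [a2 [a3 ->]]] [/PsiQ [b1 [b2 [b3 ->]]] ->]]]].
  by exists a1, a2, a3, b1, b2, b3.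
- move=> [a1 [a2 [a3 [b1 [b2 [b3 ->]]]]]].
  rewrite (combP h11 h22 h12 hc).
  exists (a1 *: W1 + a2 *: W2 + a3 *: W3).
  exists ((- b1) *: PsiF p2 p3 + (- b2) *: PsiF p3 p1 + (- b3) *: PsiF p1 p2).
  split; last split; last by [].
  + exists 3%N, (fun i => nth 0 [:: a1; a2; a3] i), (fun i => nth 0 [:: p2; p3; p1] i),
      (fun i => nth 0 [:: p3; p1; p2] i).
    split; first by case=> [[|[|[|i]]] Hi].
    split; first by case=> [[|[|[|i]]] Hi].
    by rewrite !big_ord_recr big_ord0 /= add0r.
  + exists 3%N, (fun i => nth 0 [:: - b1; - b2; - b3] i), (fun i => nth 0 [:: p2; p3; p1] i),
      (fun i => nth 0 [:: p3; p1; p2] i).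
    split; first by case=> [[|[|[|i]]] Hi].
    split; first by case=> [[|[|[|i]]] Hi].
    by rewrite !big_ord_recr big_ord0 /= add0r.
Qed.

Lemma main_frame :
  (forall X Y, Lambda2 P X -> PsiSp P Y -> ip2 X Y = 0) /\
  (forall X Y, Theta P X -> Theta P Y -> Theta P (lie2 X Y)) /\
  (exists f : 'M[R]_7 -> 'M[R]_4,
     (forall (a : R) X Y, Theta P X -> Theta P Y ->
        f (a *: X + Y) = a *: f X + f Y) /\
     (forall X, Theta P X -> so4 (f X)) /\
     (forall X Y, Theta P X -> Theta P Y -> f X = f Y -> X = Y) /\
     (forall A, so4 A -> exists2 X, Theta P X & f X = A) /\
     (forall X Y, Theta P X -> Theta P Y -> f (lie2 X Y) = lie4 (f X) (f Y))).
Proof.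
have e1 : lie2 W1 W2 = W3 by apply: WW12.
have e2 : lie2 W1 W3 = - W2 by apply: WW13.
have e3 : lie2 W2 W3 = W1 by apply: WW23.
have e4 : lie2 Q1 Q2 = -2 *: Q3 by apply: QQ12.
have e5 : lie2 Q1 Q3 = 2 *: Q2 by apply: QQ13.
have e6 : lie2 Q2 Q3 = -2 *: Q1 by apply: QQ23.
have f1 : lie2 W1 Q1 = 0 by apply: WQ11.
have f2 : lie2 W1 Q2 = 0 by apply: WQ12.
have f3 : lie2 W1 Q3 = 0 by apply: WQ13.
have f4 : lie2 W2 Q1 = 0 by apply: WQ21.
have f5 : lie2 W2 Q2 = 0 by apply: WQ22.
have f6 : lie2 W2 Q3 = 0 by apply: WQ23.
have f7 : lie2 W3 Q1 = 0 by apply: WQ31.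
have f8 : lie2 W3 Q2 = 0 by apply: WQ32.
have f9 : lie2 W3 Q3 = 0 by apply: WQ33.
have k1 : forall a1 a2 a3 b1 b2 b3, ip2 (comb W1 W2 W3 Q1 Q2 Q3 a1 a2 a3 b1 b2 b3) W1 = a1 * 2 by apply: g1.
have k2 : forall a1 a2 a3 b1 b2 b3, ip2 (comb W1 W2 W3 Q1 Q2 Q3 a1 a2 a3 b1 b2 b3) W2 = a2 * 2 by apply: g2.
have k3 : forall a1 a2 a3 b1 b2 b3, ip2 (comb W1 W2 W3 Q1 Q2 Q3 a1 a2 a3 b1 b2 b3) W3 = a3 * 2 by apply: g3.
have k4 : forall a1 a2 a3 b1 b2 b3, ip2 (comb W1 W2 W3 Q1 Q2 Q3 a1 a2 a3 b1 b2 b3) Q1 = b1 * 4 by apply: g4.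
have k5 : forall a1 a2 a3 b1 b2 b3, ip2 (comb W1 W2 W3 Q1 Q2 Q3 a1 a2 a3 b1 b2 b3) Q2 = b2 * 4 by apply: g5.
have k6 : forall a1 a2 a3 b1 b2 b3, ip2 (comb W1 W2 W3 Q1 Q2 Q3 a1 a2 a3 b1 b2 b3) Q3 = b3 * 4 by apply: g6.
split.
  move=> X Y /LamW [a1 [a2 [a3 ->]]] /PsiQ [b1 [b2 [b3 ->]]].
  by apply: orthWQ.
split.
  move=> X Y /thetaE hX /thetaE hY; apply/thetaE.
  exact: (ThetaC_lie e1 e2 e3 e4 e5 e6 f1 f2 f3 f4 f5 f6 f7 f8 f9).
exists (thmap W1 W2 W3 Q1 Q2 Q3).
split; first by move=> a X Y _ _; exact: thmap_lin.
split; first by move=> X _; exact: thmap_so4.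
split.
  move=> X Y /thetaE hX /thetaE hY; exact: (thmap_inj k1 k2 k3 k4 k5 k6).
split.
  move=> A hA; have [X hX <-] := thmap_surj k1 k2 k3 k4 k5 k6 hA.
  by exists X => //; apply/thetaE.
move=> X Y /thetaE hX /thetaE hY.
exact: (thmap_lie e1 e2 e3 e4 e5 e6 f1 f2 f3 f4 f5 f6 f7 f8 f9 k1 k2 k3 k4 k5 k6).
Qed.
End S8.


Section S9.
Variable R : realType.

Lemma ip_ge0 (a : 'rV[R]_7) : 0 <= ip a a.
Proof. by apply: sumr_ge0 => k _; rewrite -expr2 sqr_ge0. Qed.

Lemma ip_eq0 (a : 'rV[R]_7) : ip a a = 0 -> a = 0.
Proof.
move=> h; apply/rowP => k; rewrite mxE.
have hF : forall i : 'I_7, true -> 0 <= a 0 i * a 0 i by move=> i _; rewrite -expr2 sqr_ge0.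
have := psumr_eq0P hF h (i:=k) isT.
by move=> /eqP; rewrite mulf_eq0 orbb => /eqP.
Qed.

Lemma normalize (a : 'rV[R]_7) : a != 0 ->
  ip ((Num.sqrt (ip a a))^-1 *: a) ((Num.sqrt (ip a a))^-1 *: a) = 1.
Proof.
move=> ha.
have hp : 0 < ip a a.
  rewrite lt_def ip_ge0 andbT; apply: contra ha => /eqP h; apply/eqP; exact: ip_eq0.
rewrite ipZl ipZr mulrA -expr2 exprVn sqr_sqrtr ?mulVf //; last exact: ltW.
by rewrite gt_eqF.
Qed.

Lemma frame_ex (P : 'M[R]_7) : associative_plane P -> exists p1 p2 p3 : 'rV[R]_7,
  [/\ ip p1 p1 = 1, ip p2 p2 = 1, ip p1 p2 = 0 & cross p1 p2 = p3] /\
  [/\ (p1 <= P)%MS, (p2 <= P)%MS, (p3 <= P)%MS &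
     forall u, (u <= P)%MS -> u = ip u p1 *: p1 + ip u p2 *: p2 + ip u p3 *: p3].
Proof.
move=> [hr hcl].
have [i hi] : exists i, row i P != 0.
  apply/existsP; apply: contraT; rewrite negb_exists => /forallP h.
  have P0 : P = 0.
    apply/row_matrixP => i; rewrite row0; apply/eqP.
    by move: (h i); rewrite negbK.
  by move: hr; rewrite P0 mxrank0.
set a := row i P.
have ha : (a <= P)%MS := row_sub i P.
set p1 := (Num.sqrt (ip a a))^-1 *: a.
have h11 : ip p1 p1 = 1 := normalize hi.
have hp1 : (p1 <= P)%MS := scalemx_sub _ ha.
clearbody p1.
have [j hj] : exists j, ~~ (row j P <= p1)%MS.
  apply/existsP; apply: contraT; rewrite negb_exists => /forallP h.
  have : (P <= p1)%MS by apply/row_subP => j; move: (h j); rewrite negbK.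
  move/mxrankS; rewrite hr => h3.
  by have := leq_trans h3 (rank_leq_row p1).
set b := row j P.
set b' := b + (- ip b p1) *: p1.
have hb' : b' != 0.
  apply: contra hj => /eqP hb0.
  have -> : row j P = b' + ip b p1 *: p1 by rewrite /b' /b -addrA -scalerDl addNr scale0r addr0.
  by rewrite hb0 add0r scalemx_sub // submx_refl.
have hb'P : (b' <= P)%MS := addmx_sub (row_sub j P) (scalemx_sub _ hp1).
set p2 := (Num.sqrt (ip b' b'))^-1 *: b'.
have h22 : ip p2 p2 = 1 := normalize hb'.
have h12 : ip p1 p2 = 0.
  have e : ip p1 b' = 0 by rewrite /b' ipDr ipZr h11 mulr1 [ip p1 b]ipC subrr.
  by rewrite /p2 ipZr e mulr0.
have hp2 : (p2 <= P)%MS := scalemx_sub _ hb'P.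
clearbody p2.
set p3 := cross p1 p2.
have hc : cross p1 p2 = p3 by [].
have hp3 : (p3 <= P)%MS := hcl _ _ hp1 hp2.
have h33 : ip p3 p3 = 1 by exact: (h33 h11 h22 h12 hc).
have h13 : ip p1 p3 = 0 by exact: (h13 hc).
have h23 : ip p2 p3 = 0 by exact: (h23 hc).
have h21 : ip p2 p1 = 0 by rewrite ipC.
have h31 : ip p3 p1 = 0 by rewrite ipC.
have h32 : ip p3 p2 = 0 by rewrite ipC.
exists p1, p2, p3; split => //; split => //.
set S : 'M[R]_(3, 7) := \matrix_(i < 3, k < 7) (nth 0 [:: p1; p2; p3] i) 0 k.
have hSP : (S <= P)%MS.
  apply/row_subP => i'.
  have -> : row i' S = nth 0 [:: p1; p2; p3] i' by apply/rowP => k; rewrite !mxE.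
  by case: i' => [[|[|[|i']]] Hi].
have hSS : S *m S^T = 1%:M.
  apply/matrixP => i' j'.
  rewrite !mxE (eq_bigr (fun k => (nth 0 [:: p1; p2; p3] i') 0 k * (nth 0 [:: p1; p2; p3] j') 0 k));
    last by move=> k _; rewrite !mxE.
  change (ip (nth 0 [:: p1; p2; p3] i') (nth 0 [:: p1; p2; p3] j') = ((i' == j')%:R)).
  by case: i' => [[|[|[|i']]] Hi] //; case: j' => [[|[|[|j']]] Hj].
have h3 : (3 <= \rank S)%N.
  by rewrite -{1}(mxrank1 R 3) -hSS mxrankM_maxl.
have hPS : (P <= S)%MS.
  by rewrite -(mxrank_leqif_sup hSP).2 eqn_leq mxrankS //= hr h3.
move=> u hu.
set v := ip u p1 *: p1 + ip u p2 *: p2 + ip u p3 *: p3.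
set r := u + (-1) *: v.
have hvP : (v <= P)%MS.
  by rewrite /v !addmx_sub // scalemx_sub.
have hrP : (r <= P)%MS by rewrite /r addmx_sub // scalemx_sub.
have /submxP [D hD] := submx_trans hrP hPS.
have hSr : S *m r^T = 0.
  apply/matrixP => i' j'; rewrite (ord1 j').
  rewrite !mxE (eq_bigr (fun k => (nth 0 [:: p1; p2; p3] i') 0 k * r 0 k));
    last by move=> k _; rewrite !mxE.
  change (ip (nth 0 [:: p1; p2; p3] i') r = 0).
  case: i' => [[|[|[|i']]] Hi] //=; rewrite /r /v !ipDr !ipZr !ipDr !ipZr;
    rewrite ?h11 ?h22 ?h33 ?h12 ?h21 ?h13 ?h31 ?h23 ?h32 [ip _ u]ipC; ring.
have hrr : ip r r = 0.
  have -> : ip r r = (r *m r^T) 0 0 by rewrite !mxE; apply: eq_bigr => k _; rewrite !mxE.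
  by rewrite [X in X *m _]hD -mulmxA hSr mulmx0 mxE.
move/ip_eq0: hrr; rewrite /r scaleN1r => /eqP; rewrite subr_eq0 => /eqP.
by [].
Qed.
End S9.

Theorem proposition4p8 (R : realType) (P : 'M[R]_7) :
  associative_plane P ->
  (forall X Y, Lambda2 P X -> PsiSp P Y -> ip2 X Y = 0) /\
  (forall X Y, Theta P X -> Theta P Y -> Theta P (lie2 X Y)) /\
  (exists f : 'M[R]_7 -> 'M[R]_4,
     (forall (a : R) X Y, Theta P X -> Theta P Y ->
        f (a *: X + Y) = a *: f X + f Y) /\
     (forall X, Theta P X -> so4 (f X)) /\
     (forall X Y, Theta P X -> Theta P Y -> f X = f Y -> X = Y) /\
     (forall A, so4 A -> exists2 X, Theta P X & f X = A) /\
     (forall X Y, Theta P X -> Theta P Y -> f (lie2 X Y) = lie4 (f X) (f Y))).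
Proof.
move=> hP.
have [p1 [p2 [p3 [[h11 h22 h12 hc] [hp1 hp2 hp3 hspan]]]]] := frame_ex hP.
exact: (main_frame h11 h22 h12 hc hp1 hp2 hp3 hspan).
Qed.
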